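(* Let $T$ be a tree with exactly three pendant vertices $u_1,u_2,u_3$ and major vertex $m$, with $d(u_1,m)\equiv d(u_2,m)\equiv 1\pmod 3$. Then there exists an eigenvector $x$ of $L(T)$ with eigenvalue $1$ such that for every $k\in\{1,2,3\}$ and every vertex $v$ on the path $P_{u_k,m}$ with $d(v,u_k)\equiv 1\pmod 3$, one has $x(v)=0$.
   Context: $L(T)=D(T)-A(T)$ is the Laplacian matrix of $T$. A pendant vertex has degree $1$; a major vertex has degree at least $3$. $P_{r,s}$ is the path in $T$ from $r$ to $s$, and $d$ denotes distance. *)

(* Defs.v *)
From mathcomp Require Import all_boot all_order all_algebra.
Set Implicit Arguments. Unset Strict Implicit. Unset Printing Implicit Defensive.
Import GRing.Theory Num.Theory.

(* A simple graph on vertex set 'I_n is an irreflexive symmetric relation e. *)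
Section Graph.
Variable n : nat.
Variable e : rel 'I_n.

Definition deg (v : 'I_n) : nat := #|[set w | e v w]|.
Definition pendant (v : 'I_n) : bool := deg v == 1%N.
Definition major (v : 'I_n) : bool := (3 <= deg v)%N.

Definition connected : Prop := forall x y : 'I_n, connect e x y.
Definition acyclic : Prop :=
  forall c : seq 'I_n, uniq c -> (2 < size c)%N -> ~~ cycle e c.
Definition is_tree : Prop := connected /\ acyclic.

Definition dist (x y : 'I_n) : nat :=
  find (fun k => [exists p : k.-tuple 'I_n, path e x p && (last x p == y)])
       (iota 0 n.+1).

Definition on_path (r s v : 'I_n) : Prop :=
  exists p : seq 'I_n, [/\ path e r p, last r p = s, uniq (r :: p) & v \in r :: p].

Local Open Scope ring_scope.
Definition degmx (R : nzRingType) : 'M[R]_n := \matrix_(i, j) ((i == j)%:R * (deg i)%:R).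
Definition adjmx (R : nzRingType) : 'M[R]_n := \matrix_(i, j) (e i j)%:R.
Definition laplacian (R : nzRingType) : 'M[R]_n := degmx R - adjmx R.
End Graph.

(* Main.v *)
Require Import Defs.
From mathcomp Require Import all_boot all_order all_algebra.
From mathcomp Require Import zify.
From Stdlib Require Import Lia.
Import GRing.Theory Num.Theory.

Lemma last_rev_belast (T : eqType) (b : T) q : last (last b q) (rev (belast b q)) = b.
Proof.
have H : rev (b :: q) = last b q :: rev (belast b q) by rewrite lastI rev_rcons.
have := congr1 (last b) H. by rewrite /= rev_cons last_rcons => <-.
Qed.

Lemma sym_rev_path {n : nat} {e : rel 'I_n} : symmetric e ->
  forall b q, path e (last b q) (rev (belast b q)) = path e b q.
Proof.
move=> sy b q; rewrite rev_path; apply: eq_path => u v /=; exact: sy.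
Qed.

Lemma path_unique {n : nat} {e : rel 'I_n} : symmetric e -> acyclic e ->
  forall x p q, path e x p -> path e x q -> uniq (x :: p) -> uniq (x :: q) ->
  last x p = last x q -> p = q.
Proof.
move=> sy ac x p; elim: p x => [|a p IH] x [|b q] //.
- move=> _ _ _ /= /andP[Hx _] Hl.
  by rewrite /= in Hl; move: Hx; rewrite Hl mem_last.
- move=> _ _ /= /andP[Hx _] _ Hl.
  by rewrite /= in Hl; move: Hx; rewrite -Hl mem_last.
move=> /= /andP[exa pa] /andP[exb pb] /andP[xa ua] /andP[xb ub] Hl.
have [eab|neab] := eqVneq a b; first by subst b; rewrite (IH a q pa pb ua ub Hl).
exfalso.
set W := p ++ rev (belast b q).
have HW : path e a W.
  by rewrite cat_path pa /= Hl sym_rev_path.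
have HlW : last a W = b by rewrite last_cat Hl last_rev_belast.
move: HlW; case: (shortenP HW) => p2 Hp Hu Hsub Hlast.
have xW : x \notin W.
  rewrite mem_cat negb_or; apply/andP; split.
    by move: xa; rewrite inE negb_or => /andP[].
  rewrite mem_rev; apply/negP => /mem_belast; by apply/negP.
have Hc := ac (x :: a :: p2); move: Hc => Hc.
apply: (negP (Hc _ _)).
- rewrite cons_uniq Hu andbT inE negb_or; apply/andP; split.
    by move: xa; rewrite inE negb_or => /andP[].
  by apply/negP => /Hsub; apply/negP.
- clear Hc; case: p2 Hp Hu Hsub Hlast => [|c p2] //= _ _ _ Hb.
  by move: neab; rewrite Hb eqxx.
rewrite /= exa /= rcons_path Hp Hlast sy.
by move: exb.
Qed.

Lemma size_uniq_le (n : nat) (s : seq 'I_n) : uniq s -> size s <= n.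
Proof. move/card_uniqP => <-; apply: leq_trans (max_card _) _; by rewrite card_ord. Qed.

Lemma last_take_nth {T : Type} (x : T) r i : i <= size r -> last x (take i r) = nth x (x :: r) i.
Proof.
elim: r x i => [|a r IH] x [|i] //= Hi.
by rewrite IH // (set_nth_default x).
Qed.

Definition pfx {T : eqType} (m : T) r w := take (index w (m :: r)) r.
Definition sfx {T : eqType} (m : T) r w := drop (index w (m :: r)) r.
Arguments pfx {T}. Arguments sfx {T}.

Lemma index_le_size {T : eqType} (m w : T) r : w \in m :: r -> index w (m :: r) <= size r.
Proof. by rewrite -index_mem /=. Qed.

Lemma pfx_last {T : eqType} (m w : T) r : w \in m :: r -> last m (pfx m r w) = w.
Proof. move=> H; rewrite /pfx last_take_nth ?index_le_size // nth_index //. Qed.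

Lemma pfx_size {T : eqType} (m w : T) r : w \in m :: r -> size (pfx m r w) = index w (m :: r).
Proof. move=> H; rewrite /pfx size_takel // index_le_size //. Qed.

Lemma pfx_cons {T : eqType} (m w : T) r : m :: pfx m r w = take (index w (m :: r)).+1 (m :: r).
Proof. by []. Qed.

Lemma pfx_uniq {T : eqType} (m w : T) r : uniq (m :: r) -> uniq (m :: pfx m r w).
Proof. by move=> U; rewrite pfx_cons take_uniq. Qed.

Lemma pfx_path {n : nat} {e : rel 'I_n} m r w : path e m r -> path e m (pfx m r w).
Proof. exact: take_path. Qed.

Lemma pfx_sfx {T : eqType} (m w : T) r : pfx m r w ++ sfx m r w = r.
Proof. exact: cat_take_drop. Qed.

Lemma sfx_path {n : nat} {e : rel 'I_n} m r w : path e m r -> w \in m :: r -> path e w (sfx m r w).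
Proof.
move=> P H; have := P; rewrite -{1}(pfx_sfx m w r) cat_path pfx_last // => /andP[].
by [].
Qed.

Lemma sfx_uniq {T : eqType} (m w : T) r : uniq (m :: r) -> w \in m :: r -> uniq (w :: sfx m r w).
Proof.
move=> U H; have := U; rewrite -{1}(pfx_sfx m w r) -cat_cons cat_uniq => /and3P[_ Hd U2].
rewrite cons_uniq U2 andbT; apply/negP => Hw; move/hasP: Hd; apply; exists w => //.
by rewrite -{1}(@pfx_last _ m w r H) mem_last.
Qed.

Lemma sfx_last {T : eqType} (m w : T) r : w \in m :: r -> last w (sfx m r w) = last m r.
Proof. move=> H; by rewrite -{2}(pfx_sfx m w r) last_cat pfx_last. Qed.

Lemma sfx_size {T : eqType} (m w : T) r : size (sfx m r w) = size r - index w (m :: r).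
Proof. exact: size_drop. Qed.

Lemma sfx_sub {T : eqType} (m w : T) r : {subset sfx m r w <= r}.
Proof. move=> z; exact: mem_drop. Qed.

Lemma pfx_sub {T : eqType} (m w : T) r : {subset pfx m r w <= r}.
Proof. move=> z; exact: mem_take. Qed.

Lemma adj_index {n : nat} {e : rel 'I_n} : symmetric e -> acyclic e ->
  forall m r z w, path e m r -> uniq (m :: r) -> z \in m :: r -> w \in m :: r ->
  e z w -> index z (m :: r) < index w (m :: r) ->
  index w (m :: r) = (index z (m :: r)).+1.
Proof.
move=> sy ac m r z w P U Hz Hw ezw lt.
have E : rcons (pfx m r z) w = pfx m r w.
  apply: (path_unique sy ac m).
  - by rewrite rcons_path pfx_path // pfx_last.
  - exact: pfx_path.
  - rewrite -rcons_cons rcons_uniq pfx_uniq // andbT pfx_cons.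
    by rewrite in_take // -leqNgt.
  - exact: pfx_uniq.
  - by rewrite last_rcons pfx_last.
have := congr1 size E; rewrite size_rcons !pfx_size //.
Qed.

Lemma leaf_reach {n : nat} {e : rel 'I_n} : symmetric e -> irreflexive e -> acyclic e ->
  forall x s, path e x s -> uniq (x :: s) -> s != [::] ->
  exists t, [/\ path e x (s ++ t), uniq (x :: s ++ t) & pendant e (last x (s ++ t))].
Proof.
move=> sy ir ac.
suff H : forall k x s, n - size s <= k -> path e x s -> uniq (x :: s) -> s != [::] ->
  exists t, [/\ path e x (s ++ t), uniq (x :: s ++ t) & pendant e (last x (s ++ t))].
  by move=> x s; apply: (H (n - size s)).
elim=> [|k IH] x s Hk P U Ns.
  exfalso; have := size_uniq_le _ _ U; rewrite /=; move: Hk; lia.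
have [Hp|Hp] := boolP (pendant e (last x s)).
  by exists [::]; rewrite cats0.
case/lastP: s Ns P U Hp Hk => [//|s0 c] _ P U Hp Hk.
rewrite last_rcons in Hp.
have /andP[P0 epc] : path e x s0 && e (last x s0) c by rewrite -rcons_path.
set pr := last x s0 in epc.
have [z [ecz nzp]] : exists z, e c z /\ z != pr.
  have H1 : pr \in [set w | e c w] by rewrite inE sy.
  have : 1 < deg e c.
    rewrite /deg; have : 0 < #|[set w | e c w]| by apply/card_gt0P; exists pr.
    move: Hp; rewrite /pendant /deg; lia.
  rewrite /deg => /card_gt1P [u [v [Hu Hv Huv]]].
  rewrite inE in Hu; rewrite inE in Hv.
  have [Eu|Nu] := eqVneq u pr.
    exists v; split => //; by rewrite -Eu eq_sym.
  by exists u.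
have zn : z \notin x :: rcons s0 c.
  apply/negP => Hz.
  have zc : z != c by apply/negP => /eqP Ezc; move: ecz; rewrite Ezc ir.
  have Hc : c \in x :: rcons s0 c by rewrite -{1}(last_rcons x s0 c) mem_last.
  have Ic : index c (x :: rcons s0 c) = size (rcons s0 c).
    by rewrite -{1}(last_rcons x s0 c) index_last.
  have lt : index z (x :: rcons s0 c) < index c (x :: rcons s0 c).
    rewrite Ic ltn_neqAle index_le_size // andbT.
    apply/negP => /eqP Ez; move: zc; rewrite -Ic in Ez.
    by rewrite -(nth_index x Hz) Ez nth_index // eqxx.
  have ezc : e z c by rewrite sy.
  have E1 := adj_index sy ac _ _ _ _ P U Hz Hc ezc lt.
  have Ez : index z (x :: rcons s0 c) = size s0.
    by apply/eqP; rewrite -eqSS -E1 Ic size_rcons.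
  move: nzp; rewrite -(nth_index x Hz) Ez -rcons_cons nth_rcons /= ltnSn.
  by rewrite /pr (last_nth x) eqxx.
have H1 : n - size (rcons (rcons s0 c) z) <= k by move: Hk; rewrite !size_rcons; lia.
have H2 : path e x (rcons (rcons s0 c) z) by rewrite rcons_path P last_rcons.
have H3 : uniq (x :: rcons (rcons s0 c) z) by rewrite -rcons_cons rcons_uniq zn U.
have H4 : rcons (rcons s0 c) z != [::] by rewrite -cats1 -size_eq0 size_cat addn1.
have [t [Pt Ut Lt]] := IH x _ H1 H2 H3 H4.
by exists (z :: t); rewrite -cat_rcons.
Qed.

Arguments pfx_last {T m w r}. Arguments pfx_uniq {T m w r}. Arguments sfx_uniq {T m w r}. Arguments sfx_last {T m w r}.

Lemma rev_upath {n : nat} {e : rel 'I_n} : symmetric e -> forall x p,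
  path e x p -> uniq (x :: p) ->
  exists q, [/\ path e (last x p) q, uniq (last x p :: q), last (last x p) q = x,
     size q = size p & last x p :: q = rev (x :: p)].
Proof.
move=> sy x p P U; exists (rev (belast x p)).
have E : last x p :: rev (belast x p) = rev (x :: p) by rewrite [x :: p]lastI rev_rcons.
split.
- by rewrite sym_rev_path.
- by rewrite E rev_uniq.
- exact: last_rev_belast.
- by rewrite size_rev size_belast.
- exact: E.
Qed.

Lemma find_iota_eq (P : pred nat) N i : i < N -> P i -> (forall j, j < i -> ~~ P j) ->
  find P (iota 0 N) = i.
Proof.
move=> iN Pi Hj.
have Hh : has P (iota 0 N) by apply/hasP; exists i => //; rewrite mem_iota.
have Hl : find P (iota 0 N) < N by rewrite -{2}(size_iota 0 N) -has_find.
case: (ltngtP (find P (iota 0 N)) i) => // H.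
- have := nth_find 0 Hh; rewrite nth_iota // add0n => Hf.
  by move: (Hj _ H); rewrite Hf.
- have := before_find 0 H; rewrite nth_iota // add0n => Hf.
  by move: Pi; rewrite Hf.
Qed.

Lemma dist_path {n : nat} {e : rel 'I_n} : symmetric e -> acyclic e -> forall x p,
  path e x p -> uniq (x :: p) -> dist e x (last x p) = size p.
Proof.
move=> sy ac x p P U; rewrite /dist; apply: find_iota_eq.
- by have := size_uniq_le _ _ U; rewrite /= => /ltnW.
- by apply/existsP; exists (in_tuple p); rewrite /= P eqxx.
move=> j lt; apply/existsP => [[t /andP[Pt /eqP Lt]]].
move: Lt; case: (shortenP Pt) => p' Pp' Up' Sub Lt.
have E := path_unique sy ac x _ _ Pp' P Up' U Lt.
move: lt; rewrite -E ltnNge; apply/negP/negPn.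
rewrite -(size_tuple t); apply: uniq_leq_size => //.
by move: Up'; rewrite cons_uniq => /andP[].
Qed.

Lemma head_take {T : Type} (d : T) i r : 0 < i -> head d (take i r) = head d r.
Proof. by case: i => // i _; case: r. Qed.

Lemma index_cons_neq {T : eqType} (m y : T) r : m != y -> index y (m :: r) = (index y r).+1.
Proof. by move=> H; rewrite /= (negPf H). Qed.

Lemma disj_heads {n : nat} {e : rel 'I_n} : symmetric e -> acyclic e -> forall m r r',
  path e m r -> uniq (m :: r) -> path e m r' -> uniq (m :: r') ->
  head m r != head m r' -> forall y, y \in r -> y \notin r'.
Proof.
move=> sy ac m r r' P U P' U' Hh y yr; apply/negP => yr'.
have my : m != y by apply/negP => /eqP Emy; move: U; rewrite cons_uniq Emy yr.
have my' : y \in m :: r by rewrite inE yr orbT.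
have my2 : y \in m :: r' by rewrite inE yr' orbT.
have E := path_unique sy ac m _ _ (pfx_path m r y P) (pfx_path m r' y P')
  (pfx_uniq (w:=y) U) (pfx_uniq (w:=y) U') (etrans (pfx_last my') (esym (pfx_last my2))).
have H1 : head m (pfx m r y) = head m r by rewrite /pfx head_take // index_cons_neq.
have H2 : head m (pfx m r' y) = head m r' by rewrite /pfx head_take // index_cons_neq.
by move: Hh; rewrite -H1 -H2 E eqxx.
Qed.

Lemma nbr_in_leg {n : nat} {e : rel 'I_n} : symmetric e -> irreflexive e -> acyclic e ->
  forall m r, path e m r -> uniq (m :: r) ->
  (forall l, pendant e l -> l = last m r \/ exists r', [/\ path e m r', uniq (m :: r'),
      last m r' = l & forall y, y \in r' -> y \notin r]) ->
  forall w z, w \in r -> e w z -> z \in m :: r.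
Proof.
move=> sy ir ac m r P U HL w z wr ewz; apply/negP => zn.
have wm : w \in m :: r by rewrite inE wr orbT.
have wz : w != z by apply/negP => /eqP E; move: zn; rewrite -E wm.
have Pz : path e w [:: z] by rewrite /= ewz.
have Uz : uniq [:: w; z] by rewrite /= inE andbT wz.
have [t [Pt Ut Lt]] := leaf_reach sy ir ac w [:: z] Pz Uz erefl.
rewrite cat1s in Pt Ut Lt.
case: (HL _ Lt) => [Ll|[r' [P' U' L' D']]].
- have E := path_unique sy ac w _ _ Pt (sfx_path m r w P wm) Ut (sfx_uniq U wm)
    (etrans Ll (esym (sfx_last wm))).
  have : z \in sfx m r w by rewrite -E mem_head.
  by move/sfx_sub => zr; move: zn; rewrite inE zr orbT.
- have [q [Pq Uq Lq _ Eq]] := rev_upath sy m (pfx m r w) (pfx_path m r w P) (pfx_uniq (w:=w) U).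
  rewrite pfx_last // in Pq Uq Lq Eq.
  have Pc : path e w (q ++ r') by rewrite cat_path Pq Lq.
  have Uc : uniq (w :: q ++ r').
    rewrite -cat_cons cat_uniq Uq /=; apply/andP; split.
      apply/hasPn => y yr'; apply/negP => yq; move: yq; rewrite Eq mem_rev inE => /orP[/eqP Ey|].
        by move: U'; rewrite cons_uniq -Ey yr'.
      by move/pfx_sub => yr; move: (D' _ yr'); rewrite yr.
    by move: U'; rewrite cons_uniq => /andP[].
  have Lc : last w (q ++ r') = last w (z :: t) by rewrite last_cat Lq L'.
  have E := path_unique sy ac w _ _ Pc Pt Uc Ut Lc.
  case: q Pq Uq Lq Eq E Pc Uc Lc => [|a q] Pq Uq Lq Eq E _ _ _.
    by rewrite /= in Lq; move: U; rewrite cons_uniq -Lq wr.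
  case: E => Ea _.
  have : a \in rev (m :: pfx m r w) by rewrite -Eq inE mem_head orbT.
  rewrite mem_rev inE => /orP[/eqP Ea'|/pfx_sub ar].
    by move: zn; rewrite -Ea Ea' mem_head.
  by move: zn; rewrite -Ea inE ar orbT.
Qed.

Local Open Scope ring_scope.

Fixpoint ff (R : nzRingType) (d : nat) : R :=
  if d is d1.+1 then (if d1 is d2.+1 then ff R d1 - ff R d2 else 0) else 1.
Arguments ff {R}.

Lemma ffSS (R : nzRingType) d : ff d.+2 = ff d.+1 - ff d :> R.
Proof. by []. Qed.

Lemma ff3 (R : nzRingType) d : ff (d + 3) = - ff d :> R.
Proof. by rewrite addnS addnS addn1 !ffSS addrAC subrr add0r. Qed.

Lemma ff3k (R : nzRingType) k d : ff (k * 3 + d) = (-1) ^+ k * ff d :> R.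
Proof.
elim: k => [|k IH]; first by rewrite mul0n add0n expr0 mul1r.
by rewrite mulSn -addnA addnC ff3 IH exprS mulN1r mulNr.
Qed.

Lemma ff_mod1 (R : nzRingType) d : (d %% 3 = 1)%N -> ff d = 0 :> R.
Proof. by move=> H; rewrite (divn_eq d 3) H ff3k /= mulr0. Qed.

Lemma ff_mod0 (R : nzRingType) d : (d %% 3 = 0)%N -> ff d * ff d = 1 :> R.
Proof.
move=> H; rewrite (divn_eq d 3) H ff3k /= mulr1.
by rewrite -expr2 -exprM mulnC exprM sqrrN expr1n expr1n.
Qed.

Lemma ff_rec (R : nzRingType) d : (0 < d)%N -> ff d = ff d.+1 + ff d.-1 :> R.
Proof. by case: d => // d _; rewrite ffSS /= subrK. Qed.

Lemma leg_eq {n : nat} {e : rel 'I_n} (R : nzRingType) : symmetric e -> irreflexive e -> acyclic e ->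
  forall m r, path e m r -> uniq (m :: r) ->
  (forall l, pendant e l -> l = last m r \/ exists r', [/\ path e m r', uniq (m :: r'),
      last m r' = l & forall y, y \in r' -> y \notin r]) ->
  forall (a : R) (g : 'I_n -> R),
  (forall w, w \in m :: r -> g w = a * ff (size r - index w (m :: r))) ->
  forall v, v \in r -> (deg e v)%:R * g v - \sum_(w in [set w | e v w]) g w = g v.
Proof.
move=> sy ir ac m r P U HL a g Hg v vr.
have vm : v \in m :: r by rewrite inE vr orbT.
set p := index v (m :: r).
have mv : m != v by apply/negP => /eqP E; move: U; rewrite cons_uniq E vr.
have p1 : (0 < p)%N by rewrite /p index_cons_neq.
have ps : (p <= size r)%N by exact: index_le_size.
set prev := nth m (m :: r) p.-1.
have Pin : prev \in m :: r by rewrite mem_nth //= ltnS; apply: leq_trans ps; apply: leq_pred.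
have Iprev : index prev (m :: r) = p.-1.
  by rewrite index_uniq //= ltnS; apply: leq_trans ps; apply: leq_pred.
have Ev : nth m (m :: r) p = v by rewrite nth_index.
have eprev : e prev v.
  have Hi : (p.-1 < size r)%N by move: p1 ps; lia.
  have Hn : nth m r p.-1 = v by rewrite -Ev -{2}(prednK p1).
  by have := (pathP m P) _ Hi; rewrite Hn.
have Nb : forall z, e v z -> z = prev \/ (p < size r)%N /\ z = nth m (m :: r) p.+1.
  move=> z evz; have zin := nbr_in_leg sy ir ac m r P U HL v z vr evz.
  case: (ltngtP (index z (m :: r)) p) => H.
  - left; have ezv : e z v by rewrite sy.
    have := adj_index sy ac m r z v P U zin vm ezv H.
    rewrite -/p => Ep; by rewrite /prev Ep succnK nth_index.
  - right; have := adj_index sy ac m r v z P U vm zin evz H; rewrite -/p => Ez.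
    split; last by rewrite -Ez nth_index.
    by have := index_le_size m z r zin; rewrite Ez.
  - exfalso; move: evz; rewrite -(nth_index m zin) H Ev ir. by [].
have [Hlt|Heq] := ltnP p (size r).
- set next := nth m (m :: r) p.+1.
  have Nin : next \in m :: r by rewrite mem_nth.
  have Inext : index next (m :: r) = p.+1 by rewrite index_uniq.
  have enext : e v next.
    by have := (pathP m P) p Hlt; rewrite Ev.
  have Hne : prev != next.
    apply/negP => /eqP E; move: Inext; rewrite -E Iprev => E2.
    by move: p1 E2; case: (p) => // q _ /= /eqP; rewrite -(addn2 q) -{1}(addn0 q) eqn_add2l.
  have Ns : [set w | e v w] = [set prev; next].
    apply/setP => z; rewrite !inE; apply/idP/idP.
      by move/Nb => [->|[_ ->]]; rewrite eqxx ?orbT.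
    by case/orP => /eqP ->; rewrite // sy.
  rewrite /deg Ns cards2 Hne big_setU1 /= ?inE ?Hne // big_set1.
  rewrite (Hg v vm) (Hg prev Pin) (Hg next Nin) Iprev Inext -/p.
  have E1 : (size r - p.-1 = (size r - p).+1)%N by move: p1 ps Hlt; lia.
  have E2 : (size r - p.+1 = (size r - p).-1)%N by move: p1 ps Hlt; lia.
  rewrite E1 E2 [in RHS](@ff_rec R (size r - p)) ?subn_gt0 // mulrDr.
  by rewrite [in LHS](@ff_rec R (size r - p)) ?subn_gt0 // mulrDr mulr_natl mulr2n addrK.
- have Ep : p = size r by apply/eqP; rewrite eqn_leq ps Heq.
  have Ns : [set w | e v w] = [set prev].
    apply/setP => z; rewrite !inE; apply/idP/idP.
      by move/Nb => [->|[H _]]; [rewrite eqxx|move: H; rewrite Ep ltnn].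
    by move/eqP ->; rewrite sy.
  rewrite /deg Ns cards1 big_set1 (Hg prev Pin) Iprev.
  have E1 : (size r - p.-1 = 1)%N by move: p1 Ep; lia.
  by rewrite E1 /= mulr0 subr0 mul1r.
Qed.

Lemma lap_row {n : nat} (e : rel 'I_n) (R : nzRingType) (g : 'I_n -> R) i (j : 'I_1) :
  (laplacian e R *m (\matrix_(i0, j0) g i0 : 'cV[R]_n)) i j =
  (deg e i)%:R * g i - \sum_(w in [set w | e i w]) g w.
Proof.
rewrite !mxE.
under eq_bigr => k _ do rewrite /laplacian !mxE mulrBl.
rewrite sumrB (bigD1 i) //= eqxx mul1r big1 ?addr0; last first.
  by move=> k; rewrite eq_sym => /negPf ->; rewrite !mul0r.
congr (_ - _); rewrite [RHS]big_mkcond; apply: eq_bigr => k _.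
by rewrite inE; case: (e i k); rewrite ?mul1r ?mul0r.
Qed.

Lemma head_in {T : eqType} (m : T) r : r != [::] -> head m r \in r.
Proof. by case: r => // a r _; rewrite mem_head. Qed.

Lemma path_head {n : nat} {e : rel 'I_n} m r : path e m r -> r != [::] -> e m (head m r).
Proof. by case: r => // a r /= /andP[]. Qed.

Theorem mainTheorem5 (R : realFieldType) (n : nat) (e : rel 'I_n)
    (u1 u2 u3 m : 'I_n) :
  symmetric e -> irreflexive e -> is_tree e ->
  pendant e u1 -> pendant e u2 -> pendant e u3 -> uniq [:: u1; u2; u3] ->
  (forall v, pendant e v -> v \in [:: u1; u2; u3]) ->
  major e m ->
  dist e u1 m = 1 %[mod 3] -> dist e u2 m = 1 %[mod 3] ->
  exists x : 'cV[R]_n,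
    [/\ x != 0, laplacian e R *m x = 1 *: x &
        forall k v : 'I_n, k \in [:: u1; u2; u3] -> on_path e k m v ->
          dist e v k = 1 %[mod 3] -> x v 0 = 0].
Proof.
move=> sy ir [conn ac] pu1 pu2 pu3 Uu Hpend Hmaj d1 d2.
have [b1 [b2 [b3 [[Hb1 Hb2 Hb3] [n12 n23 n31]]]]] :
    exists x y z, [/\ x \in [set w | e m w], y \in [set w | e m w] & z \in [set w | e m w]]
      /\ [/\ x != y, y != z & z != x].
  by apply/card_gt2P; exact: Hmaj.
rewrite !inE in Hb1 Hb2 Hb3.
have LR : forall b, e m b -> exists r, [/\ path e m r, uniq (m :: r),
    pendant e (last m r) & head m r = b].
  move=> b emb.
  have mb : m != b by apply/negP => /eqP E; move: emb; rewrite E ir.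
  have Pb : path e m [:: b] by rewrite /= emb.
  have Ub : uniq [:: m; b] by rewrite /= inE mb.
  have [t [Pt Ut Lt]] := leaf_reach sy ir ac m [:: b] Pb Ub erefl.
  by exists (b :: t).
have [q1 [P1 U1 L1 H1]] := LR b1 Hb1.
have [q2 [P2 U2 L2 H2]] := LR b2 Hb2.
have [q3 [P3 U3 L3 H3]] := LR b3 Hb3.
set Ls := [:: q1; q2; q3].
have A : forall r, r \in Ls -> [/\ path e m r, uniq (m :: r) & pendant e (last m r)].
  by move=> r; rewrite !inE => /or3P[]/eqP->.
have B : forall r r', r \in Ls -> r' \in Ls -> r != r' -> forall y, y \in r -> y \notin r'.
  move=> r r'; rewrite !inE => /or3P[]/eqP-> /or3P[]/eqP->; rewrite ?eqxx // => _;
  apply: (disj_heads sy ac m) => //; by rewrite ?H1 ?H2 ?H3 // eq_sym.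
have Same : forall r r', r \in Ls -> r' \in Ls -> forall y, y \in r -> y \in r' -> r = r'.
  move=> r r' rin r'in y yr yr'; apply/eqP; apply/negP => /negP ne.
  by move: (B r r' rin r'in ne y yr); rewrite yr'.
have Heq : forall r r', r \in Ls -> r' \in Ls -> last m r = last m r' -> r = r'.
  move=> r r' rin r'in; have [Pr Ur _] := A r rin; have [Pr' Ur' _] := A r' r'in.
  exact: path_unique sy ac m r r' Pr Pr' Ur Ur'.
have Ul : uniq [:: last m q1; last m q2; last m q3].
  have q1in : q1 \in Ls by rewrite !inE eqxx.
  have q2in : q2 \in Ls by rewrite !inE eqxx ?orbT.
  have q3in : q3 \in Ls by rewrite !inE eqxx ?orbT.
  rewrite /= !inE !negb_or andbT; apply/andP; split; first (apply/andP; split).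
  - by apply/negP => /eqP /(Heq _ _ q1in q2in) E; move: n12; rewrite -H1 -H2 E eqxx.
  - by apply/negP => /eqP /(Heq _ _ q1in q3in) E; move: n31; rewrite -H1 -H3 E eqxx.
  - by apply/negP => /eqP /(Heq _ _ q2in q3in) E; move: n23; rewrite -H2 -H3 E eqxx.
have Sub : {subset [:: last m q1; last m q2; last m q3] <= [:: u1; u2; u3]}.
  move=> l Hl; apply: Hpend; move: Hl; rewrite !inE => /or3P[]/eqP->; by [].
have [_ Eql] := uniq_min_size Ul Sub (leqnn 3).
have C : forall l, pendant e l -> exists2 r, r \in Ls & last m r = l.
  move=> l Pl; have := Hpend l Pl; rewrite -Eql !inE => /or3P[]/eqP->.
  - by exists q1; rewrite ?inE ?eqxx.
  - by exists q2; rewrite ?inE ?eqxx ?orbT.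
  - by exists q3; rewrite ?inE ?eqxx ?orbT.
have HLg : forall r, r \in Ls -> forall l, pendant e l -> l = last m r \/
    exists r', [/\ path e m r', uniq (m :: r'), last m r' = l
      & forall y, y \in r' -> y \notin r].
  move=> r rin l Pl; have [r' r'in <-] := C l Pl.
  have [->|ne] := eqVneq r' r; [by left | right].
  have [Pr' Ur' _] := A r' r'in; exists r'; split => //.
  exact: B.
have [R1 R1in R1l] := C u1 pu1.
have [R2 R2in R2l] := C u2 pu2.
have [PR1 UR1 _] := A R1 R1in.
have [PR2 UR2 _] := A R2 R2in.
have u12 : u1 != u2 by move: Uu; rewrite /= !inE negb_or => /andP[/andP[]].
have R12 : R1 != R2 by apply/eqP => E; move: u12; rewrite -R1l -R2l E eqxx.
have D12 : forall y, y \in R1 -> y \notin R2 := B R1 R2 R1in R2in R12.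
have R21 : R2 != R1 by rewrite eq_sym.
have D21 : forall y, y \in R2 -> y \notin R1 := B R2 R1 R2in R1in R21.
have mR1 : m \notin R1 by move: UR1; rewrite cons_uniq => /andP[].
have mR2 : m \notin R2 by move: UR2; rewrite cons_uniq => /andP[].
have Ssz : forall r u, path e m r -> uniq (m :: r) -> last m r = u -> dist e u m = size r.
  move=> r u Pr Ur Lr.
  have [q [Pq Uq Lq Sq _]] := rev_upath sy m r Pr Ur.
  have := dist_path sy ac _ q Pq Uq; rewrite Lq Lr Sq; by [].
have s1 : (size R1 %% 3 = 1)%N by rewrite -(Ssz R1 u1) // d1.
have s2 : (size R2 %% 3 = 1)%N by rewrite -(Ssz R2 u2) // d2.
have f1 : ff (size R1) = 0 :> R by apply: ff_mod1.
have f2 : ff (size R2) = 0 :> R by apply: ff_mod1.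
have f2sq : ff (size R2 - 1) * ff (size R2 - 1) = 1 :> R.
  apply: ff_mod0.
  have -> : size R2 = (size R2 %/ 3 * 3 + 1)%N by rewrite {1}(divn_eq (size R2) 3) s2.
  by rewrite addnK modnMl.
pose c : R := - (ff (size R1 - 1) * ff (size R2 - 1)).
pose g := fun v : 'I_n => if v \in R1 then ff (size R1 - index v (m :: R1)) :> R
  else if v \in R2 then c * ff (size R2 - index v (m :: R2)) else 0.
have gm : g m = 0 by rewrite /g (negPf mR1) (negPf mR2).
have Hg1 : forall w, w \in m :: R1 -> g w = 1 * ff (size R1 - index w (m :: R1)).
  move=> w; rewrite inE => /orP[/eqP->|wr]; last by rewrite /g wr mul1r.
  by rewrite gm index_head subn0 f1 mulr0.
have Hg2 : forall w, w \in m :: R2 -> g w = c * ff (size R2 - index w (m :: R2)).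
  move=> w; rewrite inE => /orP[/eqP->|wr]; last by rewrite /g (negPf (D21 w wr)) wr.
  by rewrite gm index_head subn0 f2 mulr0.
have u1m : u1 != m.
  apply/negP => /eqP E; move: pu1 Hmaj; rewrite E /pendant /major => /eqP ->; by [].
have u1R1 : u1 \in R1 by move: (mem_last m R1); rewrite R1l inE (negPf u1m).
exists (\matrix_(i, j) g i); split.
- apply/negP => /eqP H.
  have := congr1 (fun M : 'cV[R]_n => M u1 0) H; rewrite !mxE /g u1R1.
  by rewrite -{1}R1l index_last // subnn /= => /eqP; rewrite oner_eq0.
- apply/matrixP => i j; rewrite lap_row scale1r mxE.
  have [Hi1|Hi1] := boolP (i \in R1).
    exact: (leg_eq R sy ir ac m R1 PR1 UR1 (HLg R1 R1in) 1 g Hg1 i Hi1).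
  have [Hi2|Hi2] := boolP (i \in R2).
    exact: (leg_eq R sy ir ac m R2 PR2 UR2 (HLg R2 R2in) c g Hg2 i Hi2).
  have [Eim|Nim] := eqVneq i m.
  + subst i; rewrite gm mulr0 sub0r.
    have R1n : R1 != [::] by apply/negP => /eqP E; move: u1R1; rewrite E.
    have R2n : R2 != [::] by apply/negP => /eqP E; move: (mem_last m R2);
      rewrite R2l E inE => /eqP E2; move: pu2 Hmaj; rewrite E2 /pendant /major => /eqP ->.
    set h1 := head m R1; set h2 := head m R2.
    have h1in : h1 \in R1 by apply: head_in.
    have h2in : h2 \in R2 by apply: head_in.
    have eh1 : e m h1 by apply: path_head.
    have eh2 : e m h2 by apply: path_head.
    have hne : h2 != h1 by apply/negP => /eqP E; move: (D21 _ h2in); rewrite E h1in.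
    have Ih1 : index h1 (m :: R1) = 1%N.
      by rewrite index_cons_neq; [rewrite /h1; case: (R1) R1n => //= a r _; rewrite eqxx|
        apply/negP => /eqP E; move: mR1; rewrite E h1in].
    have Ih2 : index h2 (m :: R2) = 1%N.
      by rewrite index_cons_neq; [rewrite /h2; case: (R2) R2n => //= a r _; rewrite eqxx|
        apply/negP => /eqP E; move: mR2; rewrite E h2in].
    have Nh : forall (r : seq 'I_n) w, path e m r -> uniq (m :: r) -> w \in r -> e m w ->
        w = head m r.
      move=> r w Pr Ur wr emw.
      have mw : m != w by apply/negP => /eqP E; move: Ur; rewrite cons_uniq E wr.
      have wm : w \in m :: r by rewrite inE wr orbT.
      have := adj_index sy ac m r m w Pr Ur (mem_head _ _) wm emw.
      rewrite index_head index_cons_neq // => /(_ erefl) [] Iw.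
      by rewrite -(nth_index m wm) index_cons_neq // Iw; case: (r).
    rewrite (bigD1 h1) ?inE // (bigD1 h2) ?inE ?eh2 ?hne //= big1; last first.
      move=> w /andP[/andP[]]; rewrite inE => emw nw1 nw2; rewrite /g.
      case: ifP => [wr|_]; first by move: nw1; rewrite (Nh R1 w PR1 UR1 wr emw) eqxx.
      case: ifP => [wr|_] //; by move: nw2; rewrite (Nh R2 w PR2 UR2 wr emw) eqxx.
    rewrite /g h1in (negPf (D21 _ h2in)) h2in Ih1 Ih2 addr0 /c.
    by rewrite mulNr -mulrA f2sq mulr1 subrr oppr0.
  + have ig : g i = 0 by rewrite /g (negPf Hi1) (negPf Hi2).
    rewrite ig mulr0 sub0r big1 ?oppr0 // => w; rewrite inE => eiw; rewrite /g.
    have ewi : e w i by rewrite sy.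
    case: ifP => [wr|_].
      have := nbr_in_leg sy ir ac m R1 PR1 UR1 (HLg R1 R1in) w i wr ewi.
      by rewrite inE (negPf Hi1) orbF => /eqP E; move: Nim; rewrite E eqxx.
    case: ifP => [wr|_] //.
    have := nbr_in_leg sy ir ac m R2 PR2 UR2 (HLg R2 R2in) w i wr ewi.
    by rewrite inE (negPf Hi2) orbF => /eqP E; move: Nim; rewrite E eqxx.
- move=> k v kin [p [Pp Lp Up vp]] dk.
  have Pk : pendant e k by move: kin; rewrite !inE => /or3P[]/eqP->.
  have [Rk Rkin Rkl] := C k Pk.
  have [PRk URk _] := A Rk Rkin.
  have [q [Pq Uq Lq _ Eq]] := rev_upath sy k p Pp Up.
  rewrite Lp in Pq Uq Lq Eq.
  have Eqk : q = Rk := path_unique sy ac m q Rk Pq PRk Uq URk (etrans Lq (esym Rkl)).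
  have vin : v \in m :: Rk by rewrite -Eqk Eq mem_rev.
  have Dv : dist e v k = (size Rk - index v (m :: Rk))%N.
    have := dist_path sy ac v _ (sfx_path m Rk v PRk vin) (sfx_uniq URk vin).
    by rewrite sfx_last // Rkl sfx_size.
  rewrite Dv in dk; rewrite mxE /g.
  have vRk : forall r, r \in Ls -> v \in r -> Rk = r.
    move=> r rin vr; apply: (Same Rk r Rkin rin v) => //.
    move: vin; rewrite inE => /orP[/eqP E|] //.
    by move: (A r rin) => [_ Ur _]; move: Ur; rewrite cons_uniq -E vr.
  case: ifP => [vr|_].
    by rewrite -(vRk R1 R1in vr) ff_mod1.
  case: ifP => [vr|_] //.
  by rewrite -(vRk R2 R2in vr) ff_mod1 ?mulr0.
Qed.
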